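(* Let $Q$ be a Moufang loop, $S\le Q$, and $x,y\in Q$. Then $x^{-1}(xS\cap yS)=y^{-1}(xS\cap yS)$.
   Context: A Moufang loop is a loop satisfying $((xy)x)z=x(y(xz))$; such loops have two-sided inverses $x^{-1}$ and the inverse property. For a set $A$, $xA=\{xa:a\in A\}$. *)

(* Defs.v *)
From mathcomp Require Import all_boot.
From mathcomp Require Import classical_sets.

Set Implicit Arguments.
Unset Strict Implicit.
Unset Printing Implicit Defensive.

Local Open Scope classical_set_scope.

(* A loop, given in its equational (universal-algebra) form (Q, *, \, /, 1):
   left and right divisions are the unique solutions of a*x = b and y*a = b. *)
Record loop := Loop {
  carrier :> Type;
  lmul : carrier -> carrier -> carrier;
  ldiv : carrier -> carrier -> carrier;
  rdiv : carrier -> carrier -> carrier;   (* rdiv b a = b / a *)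
  lone : carrier;
  mul_ldiv : forall a b, lmul a (ldiv a b) = b;
  ldiv_mul : forall a b, ldiv a (lmul a b) = b;
  rdiv_mul : forall a b, lmul (rdiv b a) a = b;
  mul_rdiv : forall a b, rdiv (lmul b a) a = b;
  mul1l : forall a, lmul lone a = a;
  mulr1 : forall a, lmul a lone = a
}.

Definition moufang (Q : loop) : Prop :=
  forall x y z : Q, lmul (lmul (lmul x y) x) z = lmul x (lmul y (lmul x z)).

(* The inverse x^{-1}: the solution of x * u = 1 (in a Moufang loop this is
   the two-sided inverse). *)
Definition linv (Q : loop) (x : Q) : Q := ldiv x (lone Q).

Definition subloop (Q : loop) (S : set Q) : Prop :=
  S (lone Q) /\
  (forall a b, S a -> S b -> S (lmul a b)) /\
  (forall a b, S a -> S b -> S (ldiv a b)) /\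
  (forall a b, S a -> S b -> S (rdiv a b)).

Definition lcoset (Q : loop) (x : Q) (A : set Q) : set Q :=
  [set lmul x a | a in A].

(* Main.v *)
Require Import Defs.
From mathcomp Require Import all_boot.
From mathcomp Require Import classical_sets.

Local Open Scope classical_set_scope.

Section M.
Variable Q : loop.
Hypothesis HQ : moufang Q.
Local Notation "a * b" := (lmul a b).
Local Notation i := (@linv Q).
Local Notation one := (lone Q).

Lemma lcan (a b c : Q) : a * b = a * c -> b = c.
Proof. by move=> h; rewrite -(ldiv_mul a b) h ldiv_mul. Qed.

Lemma flex (x y : Q) : (x * y) * x = x * (y * x).
Proof. by have := HQ x y one; rewrite !mulr1. Qed.

Lemma mulV (x : Q) : x * i x = one.
Proof. by rewrite /linv mul_ldiv. Qed.

Lemma lip (x z : Q) : i x * (x * z) = z.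
Proof.
apply: (@lcan x); by rewrite -HQ mulV mul1l.
Qed.

Lemma Vmul (x : Q) : i x * x = one.
Proof. by have := lip x one; rewrite mulr1. Qed.

Lemma invK (x : Q) : i (i x) = x.
Proof. by apply: (@lcan (i x)); rewrite mulV Vmul. Qed.

Lemma lip' (x z : Q) : x * (i x * z) = z.
Proof. by have := lip (i x) z; rewrite invK. Qed.

Lemma rip (w x : Q) : (w * x) * i x = w.
Proof.
have := HQ x (i x * w) (i x).
by rewrite mulV mulr1 lip' => ->.
Qed.

Lemma rip' (w x : Q) : (w * i x) * x = w.
Proof. by have := rip w (i x); rewrite invK. Qed.

Lemma invM (a b : Q) : i (a * b) = i b * i a.
Proof.
set c := a * b.
have ha : a = c * i b by rewrite /c rip.
have hb : i c * a = i b by rewrite ha lip.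
by have := rip (i c) a; rewrite hb.
Qed.

Lemma inv_inj (a b : Q) : i a = i b -> a = b.
Proof. by move=> h; rewrite -(invK a) h invK. Qed.

Lemma rmouf (z x y : Q) : z * (x * (y * x)) = ((z * x) * y) * x.
Proof.
apply: inv_inj; rewrite !invM HQ; done.
Qed.

Lemma key (x y s t : Q) : x * s = y * t ->
  i x * (y * s) = (s * i t) * s.
Proof.
move=> hz; set z := x * s in hz.
have hy : y = z * i t by rewrite hz rip.
have hx : x = z * i s by rewrite /z rip.
have hx' : i x = s * i z by rewrite hx invM invK.
set v := i s * y.
have hv : y = s * v by rewrite /v lip'.
rewrite hx' {1}hv flex rmouf HQ -hv hy lip.
done.
Qed.

Lemma incl (S : set Q) (HS : subloop S) (x y : Q) :
  lcoset (linv x) (lcoset x S `&` lcoset y S)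
  `<=` lcoset (linv y) (lcoset x S `&` lcoset y S).
Proof.
case: HS => [S1 [SM [SL SR]]].
move=> w [z [[s Ss <-] [t St ht]] <-].
rewrite lip.
exists (y * s); last by rewrite lip.
split; last by exists s.
exists (i x * (y * s)); last by rewrite lip'.
rewrite (key _ _ _ _ (esym ht)).
apply: (SM) => //; apply: (SM) => //.
exact: SL.
Qed.

End M.

Theorem lemma6p7 (Q : loop) (HQ : moufang Q) (S : set Q) (HS : subloop S)
  (x y : Q) :
  lcoset (linv x) (lcoset x S `&` lcoset y S)
  = lcoset (linv y) (lcoset x S `&` lcoset y S).
Proof.
apply/seteqP; split; first exact: incl.
by rewrite setIC; apply: incl.
Qed.
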